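(* Let $t>0$ and $\kappa\in(-1,1)$, and put $\epsilon:=\kappa^2$. The map $\phi_{\kappa,t}$ satisfies $\phi_{\kappa,t}(1)=0$ and $\partial_z\phi_{\kappa,t}(1)\neq 0$, so it is locally invertible near $z=1$, with local inverse $\phi_{\kappa,t}^{-1}(u)=1+\sum_{n\ge1}a_n(\kappa,t)u^n$ near $u=0$. For every $n\geq 1$, $$a_n(\kappa,t)=\frac{2}{2^{2n}n}\sum_{k=1}^{n}\binom{2n}{n-k}e^{-kt}\left\{\sum_{m=0}^{k-1}L_{k-m-1}^{(m+1)}(2kt)\,2^{m}\,P_n^{(m)}(\epsilon)\right\}.$$
   Context: Pochhammer symbol: $(a)_0=1$, $(a)_k=a(a+1)\cdots(a+k-1)$ for $k\geq1$ (so $(0)_k=\delta_{k0}$). Laguerre polynomials: for $n\ge0$ and $a\in\mathbb{R}$, $L_n^{(a)}(x):=\frac{1}{n!}\sum_{j=0}^n\frac{(-n)_j}{j!}(a+j+1)_{n-j}x^j$. Let $\alpha(z):=\frac{1-\sqrt{1-z}}{1+\sqrt{1-z}}$ (principal branch), a bijection of $\mathbb{C}\setminus[1,\infty)$ onto the open unit disc $\mathbb{D}$ with inverse $\alpha^{-1}(z)=\frac{4z}{(1+z)^2}$. For $t>0$ let $\xi_{2t}(z):=\frac{z-1}{z+1}e^{tz}$. Define $\phi_{\kappa,t}(z):=\frac{z^2}{z^2-\kappa^2}\,\alpha^{-1}(\xi_{2t}(z))$ near $z=1$, and (Lagrange inversion coefficients) $a_n(\kappa,t):=\frac{1}{n!}\partial_z^{n-1}\left[\frac{z-1}{\phi_{\kappa,t}(z)}\right]^n\Big|_{z=1}$,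 $n\ge1$. For integers $n\geq1$, $m\geq0$, define the polynomial $P_n^{(m)}(\epsilon):=\frac{(-1)^m}{m!}\sum_{k=0}^n\binom{n}{k}(-\epsilon)^k(2k)_m$. *)

(* Defs.v *)
From Stdlib Require Import Reals Arith Factorial Binomial.
Open Scope R_scope.

Fixpoint sumR (n : nat) (f : nat -> R) : R :=
  match n with O => 0 | S k => sumR k f + f k end.

Fixpoint poch (a : R) (k : nat) : R :=
  match k with O => 1 | S j => poch a j * (a + INR j) end.

Definition laguerre (n : nat) (a x : R) : R :=
  / INR (fact n) *
  sumR (S n) (fun j => poch (- INR n) j / INR (fact j)
                       * poch (a + INR j + 1) (n - j) * x ^ j).

Definition alpha_inv (w : R) : R := 4 * w / (1 + w) ^ 2.

Definition xi2 (t z : R) : R := (z - 1) / (z + 1) * exp (t * z).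

Definition phi (kappa t z : R) : R :=
  z ^ 2 / (z ^ 2 - kappa ^ 2) * alpha_inv (xi2 t z).

(* Explicit form of (z-1)/phi_{kappa,t}(z), i.e. its continuous extension
   across the removable singularity z = 1. *)
Definition Gfun (kappa t z : R) : R :=
  (z ^ 2 - kappa ^ 2) / z ^ 2 * (z + 1) * exp (- (t * z))
  * (1 + xi2 t z) ^ 2 / 4.

Fixpoint is_Dn (n : nat) (a b : R) (f g : R -> R) : Prop :=
  match n with
  | O => forall x, a < x < b -> f x = g x
  | S k => exists f' : R -> R,
      (forall x, a < x < b -> derivable_pt_lim f x (f' x)) /\ is_Dn k a b f' g
  end.

Definition Pnm (n m : nat) (eps : R) : R :=
  (-1) ^ m / INR (fact m) *
  sumR (S n) (fun k => C n k * (- eps) ^ k * poch (2 * INR k) m).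

Definition an_formula (n : nat) (kappa t : R) : R :=
  2 / (2 ^ (2 * n) * INR n) *
  sumR n (fun i => let k := S i in
    C (2 * n) (n - k) * exp (- (INR k * t)) *
    sumR k (fun m =>
      laguerre (k - m - 1) (INR m + 1) (2 * INR k * t) * 2 ^ m
      * Pnm n m (kappa ^ 2))).

(* Main.v *)
Require Import Defs.
From Stdlib Require Import Reals Arith Factorial Binomial Lia Lra.
From Coquelicot Require Import Rcomplements Hierarchy Derive AutoDerive.
Open Scope R_scope.

Lemma sumR_ext n f g : (forall j, (j < n)%nat -> f j = g j) -> sumR n f = sumR n g.
Proof. induction n; simpl; intros H; auto. rewrite IHn by (intros; apply H; lia). rewrite H by lia; auto. Qed.

Lemma sumR_plus n f g : sumR n (fun j => f j + g j) = sumR n f + sumR n g.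
Proof. induction n; simpl; [ring|rewrite IHn; ring]. Qed.

Lemma sumR_scal n K f : sumR n (fun j => K * f j) = K * sumR n f.
Proof. induction n; simpl; [ring|rewrite IHn; ring]. Qed.

Lemma sumR_zero n f : (forall j, (j < n)%nat -> f j = 0) -> sumR n f = 0.
Proof. intros H; rewrite (sumR_ext n f (fun _ => 0)) by auto. clear H. induction n; simpl; [auto|rewrite IHn; ring]. Qed.

Lemma sumR_shift n f : sumR (S n) f = f O + sumR n (fun j => f (S j)).
Proof. induction n; simpl in *; [ring|rewrite IHn; ring]. Qed.

Lemma sumR_split a b f : sumR (a + b) f = sumR a f + sumR b (fun j => f (a + j)%nat).
Proof. induction b; simpl. rewrite Nat.add_0_r; ring. rewrite Nat.add_succ_r; simpl; rewrite IHb; ring. Qed.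

Lemma sumR_rev n f : sumR (S n) f = sumR (S n) (fun j => f (n - j)%nat).
Proof.
  induction n. simpl; auto.
  rewrite (sumR_shift (S n) (fun j => f (S n - j)%nat)).
  replace (S n - 0)%nat with (S n) by lia. simpl (S n - S _)%nat.
  rewrite <- IHn. simpl. ring.
Qed.

Lemma sum_f_R0_sumR f n : sum_f_R0 f n = sumR (S n) f.
Proof. induction n as [|n IH]; simpl. ring. rewrite IH; simpl; auto. Qed.

Lemma dpl_loc (f g : R -> R) a b x l :
  (forall y, a < y < b -> f y = g y) -> a < x < b ->
  derivable_pt_lim f x l -> derivable_pt_lim g x l.
Proof.
  intros Hfg Hx H. apply is_derive_Reals. apply is_derive_Reals in H.
  apply (is_derive_ext_loc f g); auto.
  assert (Hd : 0 < Rmin (x - a) (b - x)) by (apply Rmin_pos; lra).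
  exists (mkposreal _ Hd). intros y Hy. apply Hfg.
  unfold ball in Hy; simpl in Hy. unfold AbsRing_ball, abs, minus, plus, opp in Hy; simpl in Hy.
  apply Rabs_def2 in Hy. destruct Hy as [H1 H2].
  generalize (Rmin_l (x - a) (b - x)) (Rmin_r (x - a) (b - x)); intros; lra.
Qed.

Definition Ia := 1 - / 2.
Definition Ib := 1 + / 2.
Definition II x := Ia < x < Ib.

Definition J (N : nat) (f : R -> R) (c : nat -> R) : Prop :=
  exists D : nat -> R -> R,
    (forall x, II x -> D O x = f x) /\
    (forall i x, (i < N)%nat -> II x -> derivable_pt_lim (D i) x (D (S i) x)) /\
    (forall i, (i <= N)%nat -> D i 1 = INR (fact i) * c i).

Lemma J_ext N f g c : (forall x, II x -> f x = g x) -> J N f c -> J N g c.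
Proof. intros H [D [H0 [H1 H2]]]. exists D; split; auto. intros x Hx; rewrite H0; auto. Qed.

Lemma J_ceq N f c c' : (forall i, (i <= N)%nat -> c i = c' i) -> J N f c -> J N f c'.
Proof. intros H [D [H0 [H1 H2]]]. exists D; repeat split; auto. intros i Hi; rewrite H2, H; auto. Qed.

Lemma J_scal N K f c : J N f c -> J N (fun x => K * f x) (fun i => K * c i).
Proof.
  intros [D [H0 [H1 H2]]]. exists (fun i x => K * D i x); repeat split.
  - intros x Hx; rewrite H0; auto.
  - intros i x Hi Hx. apply derivable_pt_lim_scal with (f := D i). auto.
  - intros i Hi; rewrite H2; auto; ring.
Qed.

Lemma J_plus N f g c e : J N f c -> J N g e ->
  J N (fun x => f x + g x) (fun i => c i + e i).
Proof.
  intros [D [H0 [H1 H2]]] [E [G0 [G1 G2]]]. exists (fun i x => D i x + E i x); repeat split.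
  - intros x Hx; rewrite H0, G0; auto.
  - intros i x Hi Hx. apply derivable_pt_lim_plus with (f1 := D i) (f2 := E i); auto.
  - intros i Hi; rewrite H2, G2; auto; ring.
Qed.

Lemma J_zero N : J N (fun _ => 0) (fun _ => 0).
Proof.
  exists (fun _ _ => 0); repeat split; auto.
  intros; apply derivable_pt_lim_const. intros; ring.
Qed.

Lemma J_sum N m (F : nat -> R -> R) (c : nat -> nat -> R) :
  (forall j, (j < m)%nat -> J N (F j) (c j)) ->
  J N (fun x => sumR m (fun j => F j x)) (fun i => sumR m (fun j => c j i)).
Proof.
  induction m; intros H; simpl. apply J_zero.
  apply J_plus; auto.
Qed.

Lemma sumR_S n f : sumR (S n) f = sumR n f + f n.
Proof. reflexivity. Qed.

Definition binR (n k : nat) : R := if (k <=? n)%nat then C n k else 0.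

Lemma binR_big n k : (n < k)%nat -> binR n k = 0.
Proof. intros H; unfold binR. destruct (Nat.leb_spec k n); [lia|auto]. Qed.

Lemma binR_0 n : binR n 0 = 1.
Proof. unfold binR; simpl. unfold C. rewrite Nat.sub_0_r. simpl. field. apply INR_fact_neq_0. Qed.

Lemma binR_pascal i j : binR (S i) (S j) = binR i j + binR i (S j).
Proof.
  unfold binR. destruct (Nat.leb_spec (S j) (S i)); destruct (Nat.leb_spec j i);
    destruct (Nat.leb_spec (S j) i); try lia.
  - rewrite <- pascal by lia; auto.
  - assert (j = i) by lia; subst. unfold C. rewrite !Nat.sub_diag. field; repeat split; apply INR_fact_neq_0.
  - ring.
Qed.

Lemma binR_fact i j : (j <= i)%nat -> binR i j * INR (fact j) * INR (fact (i - j)) = INR (fact i).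
Proof.
  intros H; unfold binR. destruct (Nat.leb_spec j i); [|lia]. unfold C.
  field; split; apply INR_fact_neq_0.
Qed.

Lemma binR_sum i F : sumR (S (S i)) (fun j => binR (S i) j * F j) =
   sumR (S i) (fun j => binR i j * (F j + F (S j))).
Proof.
  rewrite sumR_shift. cbv beta. rewrite binR_0.
  transitivity (F O + (sumR (S i) (fun j => binR i j * F (S j)) +
                       sumR (S i) (fun j => binR i (S j) * F (S j)))).
  { f_equal; [ring | rewrite <- sumR_plus; apply sumR_ext; intros; rewrite binR_pascal; ring]. }
  transitivity (sumR (S i) (fun j => binR i j * F j + binR i j * F (S j))).
  2:{ apply sumR_ext; intros; ring. }
  rewrite sumR_plus.
  assert (E : sumR (S (S i)) (fun j => binR i j * F j) = sumR (S i) (fun j => binR i j * F j)).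
  { rewrite sumR_S. rewrite (binR_big i (S i)) by lia. ring. }
  rewrite sumR_shift, binR_0 in E. cbv beta in E. rewrite <- E. ring.
Qed.

Definition cauchy (a b : nat -> R) (i : nat) : R := sumR (S i) (fun j => a j * b (i - j)%nat).

Lemma dpl_sum m (F F' : nat -> R -> R) x :
  (forall j, (j < m)%nat -> derivable_pt_lim (F j) x (F' j x)) ->
  derivable_pt_lim (fun y => sumR m (fun j => F j y)) x (sumR m (fun j => F' j x)).
Proof.
  induction m; intros H; simpl.
  - apply derivable_pt_lim_const.
  - apply derivable_pt_lim_plus with (f1 := fun y => sumR m (fun j => F j y)) (f2 := F m); auto.
Qed.

Lemma dpl_prod K f g x lf lg : derivable_pt_lim f x lf -> derivable_pt_lim g x lg ->
  derivable_pt_lim (fun y => K * f y * g y) x (K * (lf * g x + f x * lg)).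
Proof.
  intros Hf Hg.
  assert (H := derivable_pt_lim_mult (fun y => K * f y) g x (K*lf) lg
                 (derivable_pt_lim_scal f K x lf Hf) Hg).
  replace (K * (lf * g x + f x * lg)) with (K * lf * g x + K * f x * lg) by ring.
  exact H.
Qed.

Lemma J_mult N f g c e : J N f c -> J N g e ->
  J N (fun x => f x * g x) (cauchy c e).
Proof.
  intros [D [H0 [H1 H2]]] [E [G0 [G1 G2]]].
  exists (fun i x => sumR (S i) (fun j => binR i j * D j x * E (i - j)%nat x)); repeat split.
  - intros x Hx. simpl. rewrite binR_0, H0, G0; auto; ring.
  - intros i x Hi Hx.
    replace (sumR (S (S i)) (fun j => binR (S i) j * D j x * E (S i - j)%nat x)) with
      (sumR (S i) (fun j => binR i j * (D (S j) x * E (i - j)%nat x + D j x * E (S (i - j)) x))).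
    2:{ rewrite (sumR_ext (S (S i)) _ (fun j => binR (S i) j * (D j x * E (S i - j)%nat x)))
           by (intros; ring).
        rewrite binR_sum. apply sumR_ext. intros j Hj.
        replace (S i - S j)%nat with (i-j)%nat by lia;
        replace (S i - j)%nat with (S (i-j)) by lia; ring. }
    apply (dpl_sum (S i) (fun j y => binR i j * D j y * E (i-j)%nat y)
       (fun j y => binR i j * (D (S j) y * E (i-j)%nat y + D j y * E (S (i-j)) y)) x).
    intros j Hj.
    apply dpl_prod; [apply H1 | apply G1]; auto; lia.
  - intros i Hi. unfold cauchy. rewrite <- sumR_scal. apply sumR_ext; intros j Hj.
    rewrite H2, G2 by lia. rewrite <- (binR_fact i j) by lia. ring.
Qed.

Lemma J_exp N a : J N (fun x => exp (a * x)) (fun i => a ^ i * exp a / INR (fact i)).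
Proof.
  exists (fun i x => a ^ i * exp (a * x)); repeat split.
  - intros; simpl; ring.
  - intros i x _ _. apply is_derive_Reals. auto_derive; auto. simpl; ring.
  - intros i _. rewrite Rmult_1_r. field. apply INR_fact_neq_0.
Qed.

Fixpoint ff (k p : nat) : R := match p with O => 1 | S q => ff k q * INR (k - q) end.

Lemma J_pw N b p : J N (fun x => (x + b) ^ p) (fun i => ff p i * (1 + b) ^ (p - i) / INR (fact i)).
Proof.
  exists (fun i x => ff p i * (x + b) ^ (p - i)); repeat split.
  - intros; simpl; rewrite Nat.sub_0_r; ring.
  - intros i x _ _. apply is_derive_Reals. auto_derive; auto. simpl.
    replace (p - S i)%nat with (Init.Nat.pred (p - i)) by lia. ring.
  - intros i _. field. apply INR_fact_neq_0.
Qed.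

Lemma dinvpow q b x : x + b <> 0 ->
  derivable_pt_lim (fun y => (/ (y + b)) ^ q) x (- INR q * (/ (x + b)) ^ (S q)).
Proof.
  intros Hx. apply is_derive_Reals. auto_derive; auto.
  destruct q. simpl; ring. simpl pred. simpl. field. auto.
Qed.

Lemma J_iv N b p : 0 <= b -> J N (fun x => (/ (x + b)) ^ p)
   (fun i => (-1) ^ i * poch (INR p) i * (/ (1 + b)) ^ (p + i) / INR (fact i)).
Proof.
  intros Hb.
  exists (fun i x => (-1) ^ i * poch (INR p) i * (/ (x + b)) ^ (p + i)); repeat split.
  - intros; simpl; rewrite Nat.add_0_r; ring.
  - intros i x _ Hx. unfold II, Ia, Ib in Hx.
    assert (H := dinvpow (p + i) b x ltac:(lra)).
    apply derivable_pt_lim_scal with (a := (-1) ^ i * poch (INR p) i) in H.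
    replace ((-1) ^ S i * poch (INR p) (S i) * (/ (x + b)) ^ (p + S i)) with
      ((-1) ^ i * poch (INR p) i * (- INR (p + i) * (/ (x + b)) ^ S (p + i))).
    exact H. rewrite Nat.add_succ_r. simpl. rewrite plus_INR. ring.
  - intros i _. field. apply INR_fact_neq_0.
Qed.

Lemma ff_fact k p : (p <= k)%nat -> ff k p * INR (fact (k - p)) = INR (fact k).
Proof.
  induction p; intros H; simpl. rewrite Nat.sub_0_r; ring.
  rewrite <- IHp by lia. replace (k - p)%nat with (S (k - S p)) by lia.
  rewrite fact_simpl, mult_INR. replace (S (k - S p)) with (k - p)%nat by lia. ring.
Qed.

Lemma ff_zero k p : (k < p)%nat -> ff k p = 0.
Proof.
  induction p; intros H; [lia|]. simpl. destruct (Nat.eq_dec k p).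
  - subst. rewrite Nat.sub_diag; simpl; ring.
  - rewrite IHp by lia; ring.
Qed.

Definition dl (p i : nat) : R := ff p i * (1 + -1) ^ (p - i) / INR (fact i).

Lemma cauchy_dl p g i :
  cauchy (dl p) g i = if (p <=? i)%nat then g (i - p)%nat else 0.
Proof.
  unfold cauchy. destruct (Nat.leb_spec p i).
  - replace (S i) with (p + S (i - p))%nat by lia. rewrite sumR_split.
    rewrite sumR_zero.
    2:{ intros j Hj. cbv beta. unfold dl. replace (p - j)%nat with (S (p - j - 1)) by lia.
        simpl. unfold Rdiv; ring. }
    rewrite sumR_shift. rewrite sumR_zero.
    2:{ intros j Hj. cbv beta. unfold dl. rewrite ff_zero by lia. unfold Rdiv; ring. }
    unfold dl. rewrite Nat.add_0_r, Nat.sub_diag. simpl pow.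
    assert (E := ff_fact p p (le_n p)). rewrite Nat.sub_diag in E. simpl fact in E.
    simpl INR in E. rewrite Rmult_1_r in E. rewrite E. field. apply INR_fact_neq_0.
  - apply sumR_zero. intros j Hj. cbv beta. unfold dl. replace (p - j)%nat with (S (p - j - 1)) by lia.
    simpl. unfold Rdiv; ring.
Qed.

Lemma poch_neg r j : (j <= r)%nat ->
  poch (- INR r) j * INR (fact (r - j)) = (-1) ^ j * INR (fact r).
Proof.
  induction j; intros H; simpl. rewrite Nat.sub_0_r; ring.
  replace (r - j)%nat with (S (r - S j)) in IHj by lia.
  rewrite fact_simpl, mult_INR in IHj.
  replace (INR (S (r - S j))) with (INR r - INR j) in IHj.
  2:{ rewrite S_INR, minus_INR by lia. rewrite S_INR. ring. }
  transitivity (-1 * ((-1)^j * INR (fact r))); [rewrite <- IHj by lia; ring | ring].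
Qed.

Lemma poch_pos q p : poch (INR q + 1) p * INR (fact q) = INR (fact (q + p)).
Proof.
  induction p; simpl. rewrite Nat.add_0_r; ring.
  rewrite Nat.add_succ_r, fact_simpl, mult_INR, <- IHp, S_INR, plus_INR. ring.
Qed.

Lemma laguerre_id r m c :
  cauchy (fun i => ff (r + m + 1) i * (1 + 1) ^ (r + m + 1 - i) / INR (fact i))
         (fun i => c ^ i * exp c / INR (fact i)) r
  = exp c * 2 ^ (m + 1) * laguerre r (INR m + 1) (- (2 * c)).
Proof.
  unfold cauchy, laguerre. rewrite sumR_rev.
  rewrite <- Rmult_assoc, <- sumR_scal. apply sumR_ext. intros j Hj.
  set (k := (r + m + 1)%nat). set (q := (m + 1 + j)%nat).
  assert (Hk : (k - (r - j) = q)%nat) by (unfold k, q; lia).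
  assert (Hrj : (r - (r - j) = j)%nat) by lia.
  rewrite Hk, Hrj.
  assert (Hff : ff k (r - j) = INR (fact k) / INR (fact q)).
  { rewrite <- (ff_fact k (r - j)) by (unfold k; lia). rewrite Hk. field. apply INR_fact_neq_0. }
  assert (Hp : poch (INR m + 1 + INR j + 1) (r - j) = INR (fact k) / INR (fact q)).
  { replace (INR m + 1 + INR j + 1) with (INR q + 1) by (unfold q; rewrite !plus_INR; simpl; ring).
    replace (INR (fact k)) with (INR (fact (q + (r - j)))) by (do 2 f_equal; unfold k, q; lia).
    rewrite <- (poch_pos q (r - j)). field. apply INR_fact_neq_0. }
  assert (Hn : poch (- INR r) j = (-1) ^ j * INR (fact r) / INR (fact (r - j))).
  { rewrite <- poch_neg by lia. field. apply INR_fact_neq_0. }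
  rewrite Hff, Hp, Hn.
  replace (1 + 1) with 2 by ring.
  unfold q. rewrite pow_add.
  replace (- (2 * c)) with ((-1) * 2 * c) by ring. rewrite !Rpow_mult_distr.
  assert (Hm1 : (-1) ^ j * (-1) ^ j = 1).
  { rewrite <- Rpow_mult_distr. replace (-1 * -1) with 1 by ring. apply pow1. }
  replace (m + 1 + j)%nat with ((m+1)+j)%nat by lia. rewrite pow_add.
  field_simplify; [| repeat split; apply INR_fact_neq_0 ..].
  replace (((-1) ^ j) ^ 2) with 1 by (simpl; rewrite Rmult_1_r; exact (eq_sym Hm1)).
  unfold Rdiv; ring.
Qed.

Definition pwseq (b : R) (p i : nat) : R := ff p i * (1 + b) ^ (p - i) / INR (fact i).
Definition expseq (a : R) (i : nat) : R := a ^ i * exp a / INR (fact i).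
Definition ivseq (b : R) (p i : nat) : R :=
  (-1) ^ i * poch (INR p) i * (/ (1 + b)) ^ (p + i) / INR (fact i).

Lemma J_P N n kappa :
  J N (fun x => (1 - kappa ^ 2 * (/ x) ^ 2) ^ n) (fun m => Pnm n m (kappa ^ 2)).
Proof.
  apply J_ceq with (c := fun m => sumR (S n) (fun l => C n l * (- kappa ^ 2) ^ l *
      ivseq 0 (2 * l) m)).
  { intros m _. unfold Pnm, ivseq. rewrite Rdiv_def, Rmult_assoc, <- sumR_scal, <- sumR_scal.
    apply sumR_ext. intros l _.
    rewrite Rplus_0_r, Rinv_1, pow1, mult_INR. simpl (INR 2). 
    replace (1 + 1) with 2 by ring. unfold Rdiv. ring. }
  apply J_ext with (f := fun x => sumR (S n) (fun l => C n l * (- kappa ^ 2) ^ l * (/ (x + 0)) ^ (2 * l))).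
  { intros x _. rewrite <- sum_f_R0_sumR.
    replace (1 - kappa ^ 2 * (/ x) ^ 2) with (- kappa ^ 2 * (/ x) ^ 2 + 1) by ring.
    rewrite binomial. apply sum_eq. intros i _.
    rewrite pow1, Rmult_1_r, Rpow_mult_distr, <- pow_mult, Rplus_0_r. ring. }
  apply J_sum. intros l _. apply J_scal. apply J_iv. lra.
Qed.

Lemma sumR_scal_r n K f : sumR n (fun j => f j * K) = sumR n f * K.
Proof. induction n; simpl; [ring|rewrite IHn; ring]. Qed.

Lemma exp_pow_INR c m : exp c ^ m = exp (INR m * c).
Proof.
  induction m. simpl; rewrite Rmult_0_l, exp_0; auto.
  rewrite S_INR; simpl. rewrite IHm, <- exp_plus. f_equal; ring.
Qed.

Definition Af t z := (z + 1) * exp (- (t * z / 2)).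
Definition Bf t z := (z + -1) * exp (t * z / 2).

Lemma G_eq kappa t z : II z ->
  Gfun kappa t z = (1 - kappa ^ 2 * (/ z) ^ 2) * / 4 * (Af t z + Bf t z) ^ 2 * / (z + 1).
Proof.
  intros Hz. unfold II, Ia, Ib in Hz. unfold Gfun, xi2, Af, Bf.
  assert (E1 : exp (t * z) = exp (t * z / 2) * exp (t * z / 2))
    by (rewrite <- exp_plus; f_equal; field).
  rewrite exp_Ropp, E1, exp_Ropp.
  assert (exp (t * z / 2) > 0) by apply exp_pos.
  field. repeat split; lra.
Qed.

Definition bj n t j := (INR (2 * n - j) - INR j) * (t / 2).

Definition gj n kappa t j z :=
  (1 - kappa ^ 2 * (/ z) ^ 2) ^ n * (z + 1) ^ j * exp (bj n t j * z) * (/ (z + 1)) ^ n.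

Lemma Gn_eq n kappa t z : II z ->
  Gfun kappa t z ^ n = sumR (S (2 * n)) (fun j =>
     (/ 4) ^ n * C (2 * n) j * ((z + -1) ^ (2 * n - j) * gj n kappa t j z)).
Proof.
  intros Hz. rewrite G_eq by auto.
  rewrite !Rpow_mult_distr, <- pow_mult, (Nat.mul_comm 2 n), binomial, sum_f_R0_sumR.
  rewrite (Nat.mul_comm n 2).
  transitivity (sumR (S (2 * n)) (fun i => (1 - kappa ^ 2 * (/ z) ^ 2) ^ n * (/ 4) ^ n *
     (C (2 * n) i * Af t z ^ i * Bf t z ^ (2 * n - i)) * (/ (z + 1)) ^ n)).
  { rewrite sumR_scal_r, sumR_scal. reflexivity. }
  apply sumR_ext. intros j _. unfold gj, Af, Bf, bj.
  rewrite !Rpow_mult_distr, !exp_pow_INR.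
  replace (exp ((INR (2 * n - j) - INR j) * (t / 2) * z)) with
     (exp (INR j * - (t * z / 2)) * exp (INR (2 * n - j) * (t * z / 2))).
  2:{ rewrite <- exp_plus; f_equal; unfold Rdiv; ring. }
  unfold Rdiv; ring.
Qed.

Definition Pc n kappa := fun m => Pnm n m (kappa ^ 2).
Definition gen n kappa t j :=
  cauchy (cauchy (cauchy (Pc n kappa) (pwseq 1 j)) (expseq (bj n t j))) (ivseq 1 n).
Definition nice n kappa t k :=
  cauchy (Pc n kappa) (cauchy (pwseq 1 k) (expseq (- (INR k * t)))).
Definition cg n kappa t j :=
  if (n <? j)%nat then nice n kappa t (j - n) else gen n kappa t j.

Lemma J_gen N n kappa t j : J N (gj n kappa t j) (gen n kappa t j).
Proof.
  unfold gj, gen. apply J_mult; [apply J_mult; [apply J_mult|]|].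
  - apply J_P.
  - apply J_pw.
  - apply J_exp.
  - apply J_iv; lra.
Qed.

Lemma J_nice N n kappa t k : (k <= n)%nat -> J N (gj n kappa t (n + k)) (nice n kappa t k).
Proof.
  intros Hk.
  apply J_ext with (f := fun x => (1 - kappa ^ 2 * (/ x) ^ 2) ^ n *
                                  ((x + 1) ^ k * exp (- (INR k * t) * x))).
  2:{ unfold nice. apply J_mult; [apply J_P | apply J_mult; [apply J_pw | apply J_exp]]. }
  intros x Hx. unfold II, Ia, Ib in Hx. unfold gj, bj.
  replace ((INR (2 * n - (n + k)) - INR (n + k)) * (t / 2)) with (- (INR k * t)).
  2:{ replace (2 * n - (n + k))%nat with (n - k)%nat by lia.
      rewrite minus_INR, plus_INR by lia. field. }
  rewrite pow_add.
  assert (E : (x + 1) ^ n * (/ (x + 1)) ^ n = 1).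
  { rewrite <- Rpow_mult_distr, Rinv_r, pow1; auto; lra. }
  transitivity ((1 - kappa ^ 2 * (/ x) ^ 2) ^ n * ((x + 1) ^ k * exp (- (INR k * t) * x)) *
                 ((x + 1) ^ n * (/ (x + 1)) ^ n)).
  { rewrite E; ring. }
  ring.
Qed.

Lemma J_cg N n kappa t j : (j <= 2 * n)%nat -> J N (gj n kappa t j) (cg n kappa t j).
Proof.
  intros Hj. unfold cg. destruct (Nat.ltb_spec n j).
  - assert (H' := J_nice N n kappa t (j - n) ltac:(lia)).
    replace (n + (j - n))%nat with j in H' by lia. exact H'.
  - apply J_gen.
Qed.

Definition cG n kappa t i :=
  sumR (S (2 * n)) (fun j => (/ 4) ^ n * C (2 * n) j * cauchy (dl (2 * n - j)) (cg n kappa t j) i).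

Lemma J_G N n kappa t : J N (fun z => Gfun kappa t z ^ n) (cG n kappa t).
Proof.
  eapply J_ext. { intros z Hz. symmetry. apply Gn_eq; auto. }
  unfold cG. apply J_sum. intros j Hj. apply J_scal. apply J_mult.
  - apply J_pw.
  - apply J_cg. lia.
Qed.

Lemma laguerre_id' k r m c : k = (r + m + 1)%nat ->
  cauchy (pwseq 1 k) (expseq c) r = exp c * 2 ^ (m + 1) * laguerre r (INR m + 1) (- (2 * c)).
Proof. intros ->. apply laguerre_id. Qed.

Lemma cG_val n kappa t : (1 <= n)%nat ->
  cG n kappa t (n - 1) = (/ 4) ^ n * sumR n (fun i => C (2 * n) (S n + i) * nice n kappa t (S i) i).
Proof.
  intros Hn. unfold cG. replace (S (2 * n)) with (S n + n)%nat by lia.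
  rewrite sumR_split. rewrite sumR_zero.
  2:{ intros j Hj. cbv beta. rewrite cauchy_dl. destruct (Nat.leb_spec (2 * n - j) (n - 1)); [lia|ring]. }
  rewrite Rplus_0_l, <- sumR_scal. apply sumR_ext. intros i Hi. cbv beta.
  rewrite cauchy_dl. destruct (Nat.leb_spec (2 * n - (S n + i)) (n - 1)); [|lia].
  unfold cg. destruct (Nat.ltb_spec n (S n + i)); [|lia].
  replace (S n + i - n)%nat with (S i) by lia.
  replace (n - 1 - (2 * n - (S n + i)))%nat with i by lia. ring.
Qed.

Lemma nice_val n kappa t i :
  nice n kappa t (S i) i = 2 * exp (- (INR (S i) * t)) *
    sumR (S i) (fun m => laguerre (S i - m - 1) (INR m + 1) (2 * INR (S i) * t) * 2 ^ m
                         * Pnm n m (kappa ^ 2)).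
Proof.
  unfold nice. unfold cauchy at 1. rewrite <- sumR_scal. apply sumR_ext. intros m Hm.
  rewrite (laguerre_id' (S i) (i - m) m) by lia.
  replace (S i - m - 1)%nat with (i - m)%nat by lia.
  replace (- (2 * - (INR (S i) * t))) with (2 * INR (S i) * t) by ring.
  rewrite pow_add. unfold Pc. simpl (2 ^ 1). ring.
Qed.

Lemma final_val n kappa t : (1 <= n)%nat ->
  / INR (fact n) * (INR (fact (n - 1)) * cG n kappa t (n - 1)) = an_formula n kappa t.
Proof.
  intros Hn. rewrite cG_val by auto. unfold an_formula.
  rewrite (sumR_ext n _ (fun i => 2 * (C (2 * n) (n - S i) * exp (- (INR (S i) * t)) *
    sumR (S i) (fun m => laguerre (S i - m - 1) (INR m + 1) (2 * INR (S i) * t) * 2 ^ m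
                         * Pnm n m (kappa ^ 2))))).
  2:{ intros i Hi. cbv beta zeta. rewrite nice_val.
      rewrite pascal_step1 by lia. replace (2 * n - (S n + i))%nat with (n - S i)%nat by lia. ring. }
  rewrite sumR_scal.
  destruct n as [|n']; [lia|]. replace (S n' - 1)%nat with n' by lia.
  rewrite fact_simpl, mult_INR, pow_mult, pow_inv.
  replace (2 ^ 2) with 4 by ring.
  field. repeat split; try apply INR_fact_neq_0; try (apply pow_nonzero; lra);
  try (apply not_0_INR; lia).
Qed.

Lemma isDn_chain N (D : nat -> R -> R) :
  (forall i x, (i < N)%nat -> II x -> derivable_pt_lim (D i) x (D (S i) x)) ->
  forall k i, (i + k <= N)%nat -> is_Dn k Ia Ib (D i) (D (i + k)%nat).
Proof.
  intros HD k. induction k; intros i Hi; simpl.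
  - intros x _; rewrite Nat.add_0_r; auto.
  - exists (D (S i)). split.
    + intros x Hx. apply HD; [lia|exact Hx].
    + replace (i + S k)%nat with (S i + k)%nat by lia. apply IHk; lia.
Qed.

Lemma J_isDn N f c : J N f c -> exists h, is_Dn N Ia Ib f h /\ h 1 = INR (fact N) * c N.
Proof.
  intros [D [H0 [H1 H2]]]. exists (D N). split; [|apply H2; lia].
  destruct N as [|N'].
  - simpl. intros x Hx. symmetry; apply H0; exact Hx.
  - simpl. exists (D 1%nat). split.
    + intros x Hx. apply (dpl_loc (D O) f Ia Ib); auto. apply H1; [lia|exact Hx].
    + apply (isDn_chain (S N') D H1 N' 1). lia.
Qed.

Lemma part4 t kappa n : (1 <= n)%nat ->
     exists d (h : R -> R), 0 < d /\
       is_Dn (n - 1) (1 - d) (1 + d) (fun z => (Gfun kappa t z) ^ n) h /\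
       / INR (fact n) * h 1 = an_formula n kappa t.
Proof.
  intros Hn. destruct (J_isDn _ _ _ (J_G (n - 1) n kappa t)) as [h [Hh Hv]].
  exists (/ 2), h. split; [lra|]. split; [exact Hh|].
  rewrite Hv. apply final_val; auto.
Qed.

Lemma part1 t kappa : phi kappa t 1 = 0.
Proof. unfold phi, alpha_inv, xi2. replace (1 - 1) with 0 by ring. unfold Rdiv. ring. Qed.

Lemma part2 t kappa : -1 < kappa < 1 ->
  exists l, l <> 0 /\ derivable_pt_lim (phi kappa t) 1 l.
Proof.
  intros hk. assert (Hk2 : 1 - kappa ^ 2 > 0) by nra.
  assert (He : exp t > 0) by apply exp_pos.
  exists (2 * exp t / (1 - kappa ^ 2)). split.
  { unfold Rdiv. apply Rgt_not_eq. apply Rmult_gt_0_compat; [lra|]. apply Rinv_0_lt_compat; lra. }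
  apply is_derive_Reals. unfold phi, alpha_inv, xi2.
  assert (Hk3 : 1 * (1 * 1) + - (kappa * (kappa * 1)) <> 0) by nra.
  auto_derive.
  - replace (1 + - (1)) with 0 by ring. rewrite !Rmult_0_l, Rplus_0_r.
    repeat split; auto; lra.
  - replace (1 + - (1)) with 0 by ring. rewrite !Rmult_0_l, !Rplus_0_r, !Rmult_1_r.
    field; try (repeat split; nra).
Qed.


Lemma part3 t kappa : exists d, 0 < d /\ forall z, 0 < Rabs (z - 1) < d ->
       Gfun kappa t z = (z - 1) / phi kappa t z.
Proof.
  exists (/ 2). split; [lra|]. intros z [Hz1 Hz2].
  assert (Hz : 1/2 < z < 3/2).
  { destruct (Rabs_def2 _ _ Hz2). lra. }
  assert (Hz1' : z - 1 <> 0).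
  { intros E. rewrite E, Rabs_R0 in Hz1. lra. }
  assert (HE : exp (t * z) > 0) by apply exp_pos.
  destruct (Req_dec (z ^ 2 - kappa ^ 2) 0) as [H0|H0].
  { unfold Gfun, phi. rewrite H0. unfold Rdiv. rewrite Rinv_0. ring_simplify.
    rewrite Rmult_0_r, Rmult_0_l, Rinv_0. ring. }
  set (w := xi2 t z).
  assert (Hw : w <> 0).
  { unfold w, xi2. unfold Rdiv. apply Rmult_integral_contrapositive_currified.
    apply Rmult_integral_contrapositive_currified; auto. apply Rinv_neq_0_compat; lra. lra. }
  destruct (Req_dec (1 + w) 0) as [H1|H1].
  { unfold Gfun, phi, alpha_inv. fold w. rewrite H1. unfold Rdiv.
    replace ((0:R) ^ 2) with 0 by ring. rewrite Rinv_0. ring_simplify. rewrite !Rmult_0_r, Rinv_0. ring. }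
  unfold Gfun, phi, alpha_inv. fold w.
  replace (z - 1) with (w * (z + 1) / exp (t * z)).
  2:{ unfold w, xi2. field. split; lra. }
  rewrite exp_Ropp. field. repeat split; try lra; auto.
Qed.

Theorem proposition3p1 (t kappa : R) (ht : 0 < t) (hk : -1 < kappa < 1) :
  phi kappa t 1 = 0 /\
  (exists l, l <> 0 /\ derivable_pt_lim (phi kappa t) 1 l) /\
  (exists d, 0 < d /\ forall z, 0 < Rabs (z - 1) < d ->
       Gfun kappa t z = (z - 1) / phi kappa t z) /\
  (forall n : nat, (1 <= n)%nat ->
     exists d (h : R -> R), 0 < d /\
       is_Dn (n - 1) (1 - d) (1 + d) (fun z => (Gfun kappa t z) ^ n) h /\
       / INR (fact n) * h 1 = an_formula n kappa t).
Proof.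
  split; [apply part1|]. split; [apply part2; auto|]. split; [apply part3|].
  intros n Hn. apply part4; auto.
Qed.
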